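(* Let $\Pi$ be a positive semidefinite operator on $(\mathbb{C}^2)^{\otimes n}$ with $\Pi\le\mathbb{1}$ (a POVM element) that has at least one nonzero off-diagonal entry with respect to the computational basis. Then there exist phases $\theta_{\bm{y}}\in[0,2\pi]$, $\bm{y}\in\{0,1\}^n$, such that for $|\psi\rangle=\frac{1}{\sqrt{2^n}}\sum_{\bm{y}}e^{i\theta_{\bm{y}}}|\bm{y}\rangle$ and $W_\psi=\frac{1}{2^n}\mathbb{1}-|\psi\rangle\langle\psi|$ one has $\operatorname{tr}[W_\psi\Pi]\neq 0$.
   Context: $\{|\bm{y}\rangle:\bm{y}\in\{0,1\}^n\}$ is the computational basis of the $n$-qubit space. $W_\psi$ is called the $\psi$-induced quantum noise witness, and it ''detects'' $\Pi$ when $\operatorname{tr}[W_\psi\Pi]\ne0$. *)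

(* Defs.v *)
From HB Require Import structures.
From mathcomp Require Import all_boot all_order all_algebra.
From mathcomp Require Import complex.
From mathcomp Require Import reals trigo.
Set Implicit Arguments. Unset Strict Implicit. Unset Printing Implicit Defensive.
Import Order.TTheory GRing.Theory Num.Theory.
Local Open Scope ring_scope.
Local Open Scope complex_scope.

Definition adjmx (R : rcfType) (m n : nat) (A : 'M[R[i]]_(m, n)) : 'M[R[i]]_(n, m) :=
  (map_mx Num.conj A)^T.

Definition psd (R : rcfType) (N : nat) (A : 'M[R[i]]_N) : Prop :=
  adjmx A = A /\ forall v : 'cV[R[i]]_N, 0 <= (adjmx v *m A *m v) 0 0.

Definition povm_element (R : rcfType) (N : nat) (A : 'M[R[i]]_N) : Prop :=
  psd A /\ psd (1%:M - A).

Definition has_offdiag (R : rcfType) (N : nat) (A : 'M[R[i]]_N) : Prop :=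
  exists i j : 'I_N, i != j /\ A i j != 0.

Definition expi (R : realType) (t : R) : R[i] := (cos t) +i* (sin t).

(* |psi> = 2^{-n/2} sum_y e^{i theta_y} |y>, basis states y in {0,1}^n indexed by 'I_(2^n) *)
Definition phase_state (R : realType) (n : nat) (theta : 'I_(2 ^ n) -> R)
  : 'cV[R[i]]_(2 ^ n) :=
  \col_(y < 2 ^ n) ((Num.sqrt (2 ^+ n : R))^-1%:C * expi (theta y)).

Definition witness (R : realType) (n : nat) (psi : 'cV[R[i]]_(2 ^ n)) : 'M[R[i]]_(2 ^ n) :=
  ((2 ^+ n : R[i])^-1)%:M - psi *m adjmx psi.

(* Main.v *)
Require Import Defs.
From HB Require Import structures.
From mathcomp Require Import all_boot all_order all_algebra.
From mathcomp Require Import complex.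
From mathcomp Require Import reals trigo.
From mathcomp Require Import ring lra.
Import Order.TTheory GRing.Theory Num.Theory.
Local Open Scope ring_scope.
Local Open Scope complex_scope.
Set Implicit Arguments. Unset Strict Implicit. Unset Printing Implicit Defensive.

Section Aux.
Variable R : realType.
Variable N : nat.
Variable Pi : 'M[R[i]]_N.

Definition Qf (e : 'cV[R[i]]_N) : R[i] :=
  \sum_y \sum_z Num.conj (e y 0) * Pi y z * e z 0.

Definition upd (e : 'cV[R[i]]_N) (a : 'I_N) (u : R[i]) : 'cV[R[i]]_N :=
  \col_y (if y == a then u else e y 0).

Definition Xf (a : 'I_N) (e : 'cV[R[i]]_N) : R[i] :=
  \sum_(z | z != a) Pi a z * e z 0.
Definition Yf (a : 'I_N) (e : 'cV[R[i]]_N) : R[i] :=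
  \sum_(y | y != a) Num.conj (e y 0) * Pi y a.
Definition Kf (a : 'I_N) (e : 'cV[R[i]]_N) : R[i] :=
  \sum_(y | y != a) \sum_(z | z != a) Num.conj (e y 0) * Pi y z * e z 0.

Lemma upda e a u : upd e a u a 0 = u.
Proof. by rewrite mxE eqxx. Qed.
Lemma updN e a u y : y != a -> upd e a u y 0 = e y 0.
Proof. by move=> h; rewrite mxE ifN. Qed.

Lemma Q_upd e a u :
  Qf (upd e a u) = Num.conj u * u * Pi a a + Num.conj u * Xf a e + u * Yf a e + Kf a e.
Proof.
rewrite /Qf (bigD1 a) //= (bigD1 a) //= upda.
under eq_bigr => z hz do rewrite updN //.
under [X in _ + _ + X = _]eq_bigr => y hy.
  rewrite (bigD1 a) //= upda updN //.
  under eq_bigr => z hz do rewrite !updN //.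
  over.
rewrite big_split /= /Xf /Yf /Kf !mulr_sumr -!addrA.
congr (_ + (_ + (_ + _))); first ring.
- by apply: eq_bigr => i _; ring.
- by apply: eq_bigr => i _; ring.
Qed.


Lemma conjN (x : R[i]) : Num.conj (- x) = - Num.conj x.
Proof. by case: x. Qed.
Lemma conj1 : Num.conj (1 : R[i]) = 1.
Proof. by apply/eqP; rewrite eq_complex /= oppr0 !eqxx. Qed.

Lemma extract1 e a k (j : R[i]) : j * j = -1 -> Num.conj j = - j ->
  Qf (upd e a 1) = k -> Qf (upd e a (-1)) = k ->
  Qf (upd e a j) = k -> Qf (upd e a (-j)) = k -> Xf a e = 0.
Proof.
move=> hj hjc; rewrite !Q_upd !conjN conj1 hjc opprK.
set P := Pi a a; set X := Xf a e; set Y := Yf a e; set K := Kf a e.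
move=> E1 E2 E3 E4.
have H4 : 4 * X = 0.
  have -> : 4 * X = ((1 * 1 * P + 1 * X + 1 * Y + K) - (-1 * -1 * P + -1 * X + -1 * Y + K))
     + j * ((- j * j * P + - j * X + j * Y + K) - (j * - j * P + j * X + - j * Y + K))
     - (j * j + 1) * (2 * Y - 2 * X) by ring.
  by rewrite E1 E2 E3 E4 hj !subrr mulr0 addNr mul0r subr0 addr0.
by move/eqP: H4; rewrite mulf_eq0 pnatr_eq0 /= => /eqP.
Qed.

Lemma X_upd f a b v : a != b ->
  Xf a (upd f b v) = v * Pi a b + \sum_(z | (z != a) && (z != b)) Pi a z * f z 0.
Proof.
move=> ab; rewrite /Xf (bigD1 b) /=; last by rewrite eq_sym.
rewrite upda mulrC; congr (_ + _); apply: eq_bigr => z /andP [_ zb].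
by rewrite updN.
Qed.

End Aux.
Lemma trF (R : realType) n (Pi : 'M[R[i]]_(2 ^ n)) (th : 'I_(2 ^ n) -> R) :
  let s := ((Num.sqrt (2 ^+ n : R))^-1)%:C in
  \tr (witness (phase_state th) *m Pi) =
  (2 ^+ n)^-1 * \tr Pi - (Num.conj s * s) * Qf Pi (\col_y expi (th y)).
Proof.
move=> s.
rewrite /witness mulmxBl mul_scalar_mx linearB /= mxtraceZ -mulmxA mxtrace_mulC.
congr (_ - _); rewrite trace_mx11 !mxE /Qf exchange_big mulr_sumr /=.
apply: eq_bigr => z _; rewrite !mxE big_distrl mulr_sumr /=; apply: eq_bigr => y _.
rewrite !mxE rmorphM /=; rewrite /s; ring.
Qed.

Close Scope complex_scope.
From Stdlib Require Import Classical.

Theorem proposition2 (R : realType) (n : nat) (Pi : 'M[R[i]]_(2 ^ n)) :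
  povm_element Pi -> has_offdiag Pi ->
  exists theta : 'I_(2 ^ n) -> R,
    (forall y, 0 <= theta y <= 2 * pi) /\
    \tr (witness (phase_state theta) *m Pi) != 0.
Proof.
move=> _ [a [b [ab hab]]].
pose th (tu tv : R) := fun y : 'I_(2 ^ n) => if y == a then tu else if y == b then tv else 0.
pose ok (t : R) := (0 <= t) && (t <= 2 * pi).
have thok : forall tu tv, ok tu -> ok tv -> forall y, 0 <= th tu tv y <= 2 * pi.
  move=> tu tv hu hv y; rewrite /th; case: ifP => _ //; case: ifP => _ //.
  by apply/andP; split; have := pi_gt0 R; lra.
case: (classic (exists tu tv, [/\ ok tu, ok tv &
          \tr (witness (phase_state (th tu tv)) *m Pi) != 0])).
  by move=> [tu [tv [hu hv hne]]]; exists (th tu tv); split => //; apply: thok.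
move=> H.
pose s : R[i] := (((Num.sqrt (2 ^+ n : R))^-1)%:C)%C.
have hs : s != 0.
  rewrite /s; apply/negP => /eqP [] /eqP; rewrite invr_eq0 sqrtr_eq0 leNgt.
  by rewrite exprn_gt0.
have hb : Num.conj s * s != 0 by rewrite mulf_neq0 // conjC_eq0.
pose k := (2 ^+ n)^-1 * \tr Pi / (Num.conj s * s).
pose one : 'cV[R[i]]_(2 ^ n) := const_mx 1.
have hQ : forall tu tv, ok tu -> ok tv ->
    Qf Pi (upd (upd one b (expi tv)) a (expi tu)) = k.
  move=> tu tv hu hv.
  have h0 : \tr (witness (phase_state (th tu tv)) *m Pi) = 0.
    by apply/eqP; apply/negPn/negP => hne; apply: H; exists tu, tv.
  have -> : upd (upd one b (expi tv)) a (expi tu) = \col_y expi (th tu tv y).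
    apply/matrixP => y z; rewrite ord1 !mxE /th.
    case: eqP => _ //; case: eqP => _ //.
    by rewrite /expi cos0 sin0.
  move: h0; rewrite trF => /eqP; rewrite subr_eq0 => /eqP E.
  by rewrite /k E -/s mulrC mulKf.
have e0 : expi (0 : R) = 1 by rewrite /expi cos0 sin0.
have epi : expi (pi : R) = -1.
  by apply/eqP; rewrite /expi cospi sinpi eq_complex /= oppr0 !eqxx.
have eh : expi (pi / 2 : R) = 'i%C by rewrite /expi cos_pihalf sin_pihalf.
have e3 : expi (pi / 2 + pi : R) = - 'i%C by rewrite /expi cosDpi sinDpi cos_pihalf sin_pihalf.
have hj : ('i%C : R[i]) * 'i%C = -1 by rewrite -expr2 sqr_i.
have hjc : Num.conj ('i%C : R[i]) = - 'i%C.
  by apply/eqP; rewrite eq_complex /= oppr0 !eqxx.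
have pg := pi_gt0 R.
have ok0 : ok 0 by rewrite /ok; apply/andP; split; lra.
have okpi : ok pi by rewrite /ok; apply/andP; split; lra.
have okh : ok (pi / 2) by rewrite /ok; apply/andP; split; lra.
have ok3 : ok (pi / 2 + pi) by rewrite /ok; apply/andP; split; lra.
have X0 : forall tv, ok tv -> Xf Pi a (upd one b (expi tv)) = 0.
  move=> tv hv; apply: (@extract1 _ _ _ _ _ k 'i%C hj hjc).
  - by rewrite -e0; apply: hQ.
  - by rewrite -epi; apply: hQ.
  - by rewrite -eh; apply: hQ.
  - by rewrite -e3; apply: hQ.
have := X0 _ ok0; have := X0 _ okpi.
rewrite !X_upd // e0 epi.
set S := (\sum_(z | _) _) => h1 h2.
have : 2 * Pi a b = 0.
  have -> : 2 * Pi a b = (1 * Pi a b + S) - (-1 * Pi a b + S) by ring.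
  by rewrite h1 h2 subrr.
by move/eqP; rewrite mulf_eq0 pnatr_eq0 /= (negbTE hab).
Qed.
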